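(* Let $X$ be a compact Hausdorff space, $Y$ a normed linear space over $\mathbb{R}$ with norm $\|\cdot\|$, and $C(X,Y)$ the space of continuous functions $X\to Y$ equipped with the uniform norm $|||f||| = \max_{x\in X}\|f(x)\|$. Let $H\subset C(X,Y)$ be a linear subspace of finite dimension $n\ge 1$. Let $A$ be a compact Hausdorff topological space and $\{f_a\}_{a\in A}\subset C(X,Y)$ a family such that the map $A\to C(X,Y)$, $a\mapsto f_a$, is continuous (with respect to the uniform norm). Then $f^*\in H$ is a best simultaneous approximation to $\{f_a\}_{a\in A}$ from $H$, i.e. $$\max_{a\in A}|||f_a-f^*|||\le \max_{a\in A}|||f_a-f|||\quad\text{for all } f\in H,$$ if and only if there exist an integer $k$ with $1\le k\le n+1$, elements $a_1,\dots,a_k\in A$, points $x_1,\dots,x_k\in X$, and positive numbers $\lambda_1,\dots,\lambda_k$ with $\sum_{i=1}^k\lambda_i=1$ such that (i) $\sum_{i=1}^k\lambda_i\|f_{a_i}(x_i)-f^*(x_i)\|\le \sum_{i=1}^k\lambda_i\|f_{a_i}(x_i)-f(x_i)\|$ for all $f\in H$; and (ii) $\|f_{a_i}(x_i)-f^*(x_i)\| = |||f_{a_i}-f^*||| = \max_{a\in A}|||f_a-f^*|||$ for all $i$ with $1\le i\le k$. *)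

(* Defs.v *)
From HB Require Import structures.
From mathcomp Require Import all_boot all_order all_algebra.
From mathcomp Require Import all_classical all_reals all_analysis.
Set Implicit Arguments. Unset Strict Implicit. Unset Printing Implicit Defensive.
Import Order.TTheory GRing.Theory Num.Theory.
Import numFieldNormedType.Exports.
Local Open Scope classical_set_scope.
Local Open Scope ring_scope.

(* uniform norm |||f||| = max_{x in X} ||f x|| (a max for continuous f on compact X) *)
Definition unorm {R : realType} {X : topologicalType} {Y : normedModType R}
  (f : X -> Y) : R := sup (range (fun x => `|f x|)).

Definition sdev {R : realType} {X : topologicalType} {Y : normedModType R}
  {A : Type} (f : A -> X -> Y) (h : X -> Y) : R :=
  sup (range (fun a => unorm (fun x => f a x - h x))).

Definition inSpan {R : realType} {X : Type} {Y : normedModType R} {n : nat}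
  (g : 'I_n -> X -> Y) (h : X -> Y) : Prop :=
  exists c : 'I_n -> R, h = (fun x => \sum_(i < n) c i *: g i x).

(* g_0, ..., g_{n-1} are linearly independent (so span g has dimension n) *)
Definition lin_indep {R : realType} {X : Type} {Y : normedModType R} {n : nat}
  (g : 'I_n -> X -> Y) : Prop :=
  forall c : 'I_n -> R, (forall x, \sum_(i < n) c i *: g i x = 0) ->
    forall i, c i = 0.

(* Main.v *)
Require Import Defs.
From HB Require Import structures.
From mathcomp Require Import all_boot all_order all_algebra.
From mathcomp Require Import all_classical all_reals all_analysis.
From mathcomp Require Import lra ring.
Set Implicit Arguments. Unset Strict Implicit. Unset Printing Implicit Defensive.
Import Order.TTheory GRing.Theory Num.Theory.
Import numFieldNormedType.Exports.
Local Open Scope classical_set_scope.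
Local Open Scope ring_scope.


Section Dot.
Context {R : realType} {n : nat}.
Definition dotv (u v : 'rV[R]_n) : R := \sum_i u ord0 i * v ord0 i.

Lemma dotvDr u v v' : dotv u (v + v') = dotv u v + dotv u v'.
Proof. by rewrite /dotv -big_split; apply: eq_bigr => i _; rewrite mxE mulrDr. Qed.
Lemma dotvZr u k v : dotv u (k *: v) = k * dotv u v.
Proof.
rewrite /dotv mulr_sumr; apply: eq_bigr => i _; rewrite mxE.
by rewrite mulrCA.
Qed.
Lemma dotvDl u u' v : dotv (u + u') v = dotv u v + dotv u' v.
Proof. by rewrite /dotv -big_split; apply: eq_bigr => i _; rewrite mxE mulrDl. Qed.
Lemma dotvZl k u v : dotv (k *: u) v = k * dotv u v.
Proof.
rewrite /dotv mulr_sumr; apply: eq_bigr => i _; rewrite mxE.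
by rewrite mulrA.
Qed.
Lemma dotv0r u : dotv u 0 = 0.
Proof. by rewrite /dotv big1 // => i _; rewrite mxE mulr0. Qed.
Lemma dotv0l u : dotv 0 u = 0.
Proof. by rewrite /dotv big1 // => i _; rewrite mxE mul0r. Qed.
Lemma dotvNr u v : dotv u (- v) = - dotv u v.
Proof. by rewrite -scaleN1r dotvZr mulN1r. Qed.
Lemma dotvBr u v v' : dotv u (v - v') = dotv u v - dotv u v'.
Proof. by rewrite dotvDr dotvNr. Qed.
Lemma dotvNl u v : dotv (- u) v = - dotv u v.
Proof. by rewrite -scaleN1r dotvZl mulN1r. Qed.
Lemma dotvBl u u' v : dotv (u - u') v = dotv u v - dotv u' v.
Proof. by rewrite dotvDl dotvNl. Qed.
Lemma dotvC u v : dotv u v = dotv v u.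
Proof. by rewrite /dotv; apply: eq_bigr => i _; rewrite mulrC. Qed.
Lemma dotv_ge0 u : 0 <= dotv u u.
Proof. by rewrite /dotv sumr_ge0 // => i _; rewrite -expr2 sqr_ge0. Qed.
Lemma dotv_eq0 u : dotv u u = 0 -> u = 0.
Proof.
move=> /eqP; rewrite /dotv psumr_eq0 => [/allP H|i _]; last by rewrite -expr2 sqr_ge0.
apply/rowP => i; rewrite mxE; have := H i (mem_index_enum _).
by rewrite -expr2 sqrf_eq0 ord1 => /eqP.
Qed.

Lemma HB_fin (q : 'rV[R]_n -> R) :
  (forall a b, q (a + b) <= q a + q b) ->
  (forall (l : R) a, 0 < l -> l * q a <= q (l *: a)) ->
  exists w, forall c, dotv w c <= q c.
Proof.
move=> qD qZ.
have q0 : 0 <= q 0 by have := qD 0 0; rewrite addr0; lra.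
suff : forall j, (j <= n)%N -> exists w : 'rV[R]_n, forall c : 'rV[R]_n,
    (forall i : 'I_n, (j <= i)%N -> c ord0 i = 0) -> dotv w c <= q c.
  move=> /(_ n (leqnn n)) [w Hw]; exists w => c; apply: Hw => i.
  by rewrite leqNgt ltn_ord.
elim=> [_|j IH ltjn].
  exists (0 : 'rV[R]_n) => c Hc.
  have -> : c = 0 by apply/rowP => i; rewrite mxE Hc.
  by rewrite dotv0r.
have [w Hw] := IH (ltnW ltjn).
pose J := Ordinal ltjn.
pose e : 'rV[R]_n := \row_i (i == J)%:R.
pose l := dotv w.
pose S := [set y | exists u : 'rV[R]_n,
  (forall i : 'I_n, (j <= i)%N -> u ord0 i = 0) /\ y = l u - q (u - e)].
have ubS : forall u' : 'rV[R]_n, (forall i : 'I_n, (j <= i)%N -> u' ord0 i = 0) ->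
    ubound S (q (u' + e) - l u').
  move=> u' Hu' y [u [Hu ->]].
  have : l (u + u') <= q (u + u').
    by apply: Hw => i Hi; rewrite !mxE Hu ?Hu' // addr0.
  have := qD (u - e) (u' + e).
  rewrite (_ : u - e + (u' + e) = u + u'); last first.
    by apply/rowP => i; rewrite !mxE; lra.
  rewrite /l dotvDr; lra.
have supp0 : forall i : 'I_n, (j <= i)%N -> (0 : 'rV[R]_n) ord0 i = 0.
  by move=> i _; rewrite mxE.
have S0 : S (l 0 - q (0 - e)) by exists 0.
have hsS : has_sup S by split; [exists (l 0 - q (0 - e)) | exists (q (0 + e) - l 0); apply: ubS].
pose al := sup S.
have key : forall (v : 'rV[R]_n) (t : R), (forall i : 'I_n, (j <= i)%N -> v ord0 i = 0) ->
    l v + t * al <= q (v + t *: e).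
  move=> v t Hv; have [tlt0|tgt0|->] := ltrgtP t 0.
  - pose u := (- t)^-1 *: v.
    have Hu : forall i : 'I_n, (j <= i)%N -> u ord0 i = 0.
      by move=> i Hi; rewrite mxE Hv // mulr0.
    have nt0 : - t != 0 by rewrite oppr_eq0 lt_eqF.
    have vu : v = (- t) *: u by rewrite /u scalerA mulfV // scale1r.
    have H1 : l u - q (u - e) <= al by apply: sup_upper_bound => //; exists u.
    have -> : v + t *: e = (- t) *: (u - e).
      by rewrite scalerBr -vu scaleNr opprK.
    have H2 := qZ (- t) (u - e); rewrite oppr_gt0 in H2; have {}H2 := H2 tlt0.
    rewrite vu /l dotvZr.
    have : - t * (l u - al) <= - t * q (u - e).
      by rewrite ler_pM2l ?oppr_gt0 //; lra.
    rewrite /l; lra.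
  - pose u := t^-1 *: v.
    have Hu : forall i : 'I_n, (j <= i)%N -> u ord0 i = 0.
      by move=> i Hi; rewrite mxE Hv // mulr0.
    have nt0 : t != 0 by rewrite gt_eqF.
    have vu : v = t *: u by rewrite /u scalerA mulfV // scale1r.
    have H1 : al <= q (u + e) - l u by apply: ge_sup; [exists (l 0 - q (0 - e))|apply: ubS].
    have -> : v + t *: e = t *: (u + e) by rewrite scalerDr vu.
    have H2 := qZ t (u + e) tgt0.
    rewrite vu /l dotvZr.
    have : t * (l u + al) <= t * q (u + e) by rewrite ler_pM2l //; lra.
    rewrite /l; lra.
  - by rewrite mul0r addr0 scale0r addr0; apply: Hw.
exists (\row_i (if i == J then al else w ord0 i)) => c Hc.
pose t := c ord0 J.
pose v := c - t *: e.
have Hv : forall i : 'I_n, (j <= i)%N -> v ord0 i = 0.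
  move=> i Hi; rewrite !mxE; case: (eqVneq i J) => [->|neq].
    by rewrite ?eqxx ?mulr1 subrr.
  rewrite mulr0 subr0; apply: Hc; rewrite ltn_neqAle Hi andbT.
  by apply: contra neq => /eqP h; apply/eqP/val_inj; rewrite /= h.
have Hdot : dotv (\row_i (if i == J then al else w ord0 i)) c = l v + t * al.
  suff : dotv (\row_i (if i == J then al else w ord0 i)) c - l v = t * al by lra.
  rewrite /l /dotv -sumrB (bigD1 J) //= big1 => [| i /negbTE ne]; last first.
    by rewrite !mxE ne mulr0 subr0 subrr.
  by rewrite !mxE eqxx mulr1 subrr mulr0 subr0 addr0 mulrC.
rewrite Hdot (_ : c = v + t *: e); last by rewrite /v subrK.
have := key v t Hv.
by rewrite /v subrK.
Qed.

End Dot.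


Lemma cont_fst (T U : topologicalType) : continuous (@fst T U).
Proof. by move=> [x y]; apply: cvg_fst. Qed.
Arguments cont_fst {T U} x.
Lemma cont_snd (T U : topologicalType) : continuous (@snd T U).
Proof. by move=> [x y]; apply: cvg_snd. Qed.
Arguments cont_snd {T U} x.
Lemma cont_sum (R : realType) (T : topologicalType) (I : Type) (r : seq I) (P : pred I)
  (F : I -> T -> R) : (forall i, continuous (F i)) ->
  continuous (fun x => \sum_(i <- r | P i) F i x).
Proof.
move=> Fc; elim: r => [|i r IH].
  by under eq_fun do rewrite big_nil; apply: cst_continuous.
case Pi: (P i).
  under eq_fun do rewrite big_cons Pi.
  by move=> x; apply: continuousD; [apply: Fc|apply: IH].
by under eq_fun do rewrite big_cons Pi.
Qed.

Lemma cont_fst11 (T U V : topologicalType) : continuous (fun x : (T * U) * V => x.1.1).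
Proof. move=> x; exact: (continuous_comp (cont_fst x) (cont_fst x.1)). Qed.
Lemma cont_fst12 (T U V : topologicalType) : continuous (fun x : (T * U) * V => x.1.2).
Proof. move=> x; exact: (continuous_comp (cont_fst x) (cont_snd x.1)). Qed.

Section Conv.
Context {R : realType} {n : nat} (W : set 'rV[R]_n).

Definition convk (k : nat) : set 'rV[R]_n :=
  [set z | exists (lam : 'I_k -> R) (w : 'I_k -> 'rV[R]_n),
     (forall i, 0 <= lam i) /\ \sum_i lam i = 1 /\ (forall i, W (w i)) /\
     z = \sum_i lam i *: w i].

Lemma cara k : (n.+1 <= k)%N -> convk k.+1 `<=` convk k.
Proof.
move=> lek z [lam [w [l0 [l1 [Ww ->]]]]].
pose M : 'M[R]_(k, n) := \matrix_(i < k) (w (lift ord0 i) - w ord0).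
have KM : kermx M != 0.
  apply/negP => /eqP K0; have := mxrank_ker M; rewrite K0 mxrank0 => /eqP.
  rewrite eq_sym subn_eq0 => H; have := leq_trans H (rank_leq_col M).
  by move=> /(leq_trans lek); rewrite ltnn.
have [i0 nz] : exists i, row i (kermx M) != 0.
  have : [exists i, row i (kermx M) != 0].
    apply: contraNT KM => /existsPn H; apply/eqP/row_matrixP => i.
    by rewrite row0; apply/eqP; have := H i; rewrite negbK.
  by case/existsP => i ?; exists i.
pose nu := row i0 (kermx M).
have nuM : nu *m M = 0 by rewrite /nu -row_mul mulmx_ker row0.
have nusum : \sum_i nu ord0 i *: (w (lift ord0 i) - w ord0) = 0.
  by rewrite -[RHS]nuM mulmx_sum_row; apply: eq_bigr => i _; rewrite rowK.
pose mu (j : 'I_k.+1) := if unlift ord0 j is Some i then nu ord0 i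
                          else - \sum_i nu ord0 i.
have muL : forall i, mu (lift ord0 i) = nu ord0 i by move=> i; rewrite /mu liftK.
have mu0 : \sum_j mu j = 0.
  rewrite big_ord_recl; under eq_bigr do rewrite muL.
  by rewrite /mu unlift_none addNr.
have muw : \sum_j mu j *: w j = 0.
  rewrite big_ord_recl; under eq_bigr do rewrite muL.
  have nus : \sum_i nu ord0 i *: w (lift ord0 i) - (\sum_i nu ord0 i) *: w ord0 = 0.
    by rewrite scaler_suml -sumrB -[RHS]nusum; apply: eq_bigr => i _; rewrite scalerBr.
  by rewrite /mu unlift_none scaleNr addrC.
have [jp mujp] : exists j, 0 < mu j.
  have : [exists j, 0 < mu j].
    apply: contraNT nz => /existsPn H.
    have Hle : forall j, 0 <= - mu j by move=> j; rewrite oppr_ge0 leNgt H.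
    have : \sum_j - mu j == 0 by rewrite sumrN mu0 oppr0.
    rewrite psumr_eq0 // => /allP Hall.
    apply/eqP/rowP => i; rewrite [RHS]mxE; change (nu ord0 i = 0); rewrite -muL.
    by have := Hall (lift ord0 i) (mem_index_enum _); rewrite oppr_eq0 => /eqP.
  by case/existsP => j ?; exists j.
pose j0 := [arg min_(j < jp | 0 < mu j) (lam j / mu j)]%O.
have [j0pos j0min] : 0 < mu j0 /\ forall j, 0 < mu j -> lam j0 / mu j0 <= lam j / mu j.
  by rewrite /j0; case: arg_minP => //= j Pj Hj; split => // j' /Hj.
pose th := lam j0 / mu j0.
have th0 : 0 <= th by rewrite divr_ge0 // ltW.
pose lam' j := lam j - th * mu j.
have l'0 : forall j, 0 <= lam' j.
  move=> j; rewrite /lam' subr_ge0; case: (ltrP 0 (mu j)) => muj.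
    by have := j0min j muj; rewrite -/th ler_pdivlMr.
  by apply: le_trans (l0 j); rewrite mulr_ge0_le0.
have l'j0 : lam' j0 = 0 by rewrite /lam' /th divfK ?subrr // gt_eqF.
have l'1 : \sum_j lam' j = 1 by rewrite /lam' sumrB -mulr_sumr mu0 mulr0 subr0 l1.
have l'w : \sum_j lam' j *: w j = \sum_j lam j *: w j.
  rewrite /lam'; under eq_bigr do rewrite scalerBl.
  rewrite sumrB.
  have -> : \sum_j (th * mu j) *: w j = th *: \sum_j mu j *: w j.
    by rewrite scaler_sumr; apply: eq_bigr => j _; rewrite scalerA.
  by rewrite muw scaler0 subr0.
exists (fun i => lam' (lift j0 i)), (fun i => w (lift j0 i)).
split; first by move=> i; apply: l'0.
split; first by rewrite -l'1 (bigD1_ord j0) //= l'j0 add0r.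
split; first by move=> i; apply: Ww.
by rewrite -l'w (bigD1_ord j0) //= l'j0 scale0r add0r.
Qed.

Fixpoint Crec (k : nat) : set 'rV[R]_n :=
  if k is k'.+1 then
    (fun x : ('rV[R]_n * 'rV[R]_n) * R => (1 - x.2) *: x.1.1 + x.2 *: x.1.2) @`
      ((Crec k' `*` W) `*` `[(0:R), 1]%classic)
  else W.

Lemma Crec_compact : compact W -> forall k, compact (Crec k).
Proof.
move=> cW; elim => [//|k IH] /=.
apply: continuous_compact; last first.
  by apply: compact_setX; [apply: compact_setX|apply: segment_compact].
apply: continuous_subspaceT => x.
apply: cvgD; apply: cvgZ.
- apply: cvgB; first exact: cvg_cst.
  exact: cont_snd.
- exact: cont_fst11.
- exact: cont_snd.
- exact: cont_fst12.
Qed.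

End Conv.


Definition cons_fun {T : Type} {k : nat} (a : T) (f : 'I_k -> T) (j : 'I_k.+1) : T :=
  if unlift ord0 j is Some i then f i else a.
Lemma cons_fun0 {T : Type} {k : nat} (a : T) (f : 'I_k -> T) : cons_fun a f ord0 = a.
Proof. by rewrite /cons_fun unlift_none. Qed.
Lemma cons_funL {T : Type} {k : nat} (a : T) (f : 'I_k -> T) i : cons_fun a f (lift ord0 i) = f i.
Proof. by rewrite /cons_fun liftK. Qed.

Section Conv2.
Context {R : realType} {n : nat} (W : set 'rV[R]_n).

Lemma Crec_sub_conv k : Crec W k `<=` convk W k.+1.
Proof.
elim: k => [|k IH] z.
  move=> Wz; exists (fun _ => 1), (fun _ => z); split; first by move=> ?; exact: ler01.
  by split; [rewrite big_ord1|split; [by []|rewrite big_ord1 scale1r]].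
case=> [[[u w] s] [[Cu Ww] s01] <-] /=.
rewrite /= in_itv /= in s01; case/andP: s01 => s0 s1.
have [lam [ws [l0 [l1 [Wws ->]]]]] := IH u Cu.
exists (cons_fun s (fun i => (1 - s) * lam i)), (cons_fun w ws).
split.
  move=> j; rewrite /cons_fun; case: (unlift ord0 j) => [i|] //.
  by rewrite mulr_ge0 // subr_ge0.
split.
  rewrite big_ord_recl cons_fun0; under eq_bigr do rewrite cons_funL.
  by rewrite -mulr_sumr l1; ring.
split; first by move=> j; rewrite /cons_fun; case: (unlift ord0 j).
apply/esym; rewrite big_ord_recl !cons_fun0; under eq_bigr do rewrite !cons_funL.
rewrite scaler_sumr addrC; congr (_ + _); apply: eq_bigr => i _.
by rewrite scalerA.
Qed.

Lemma Crec_ne w0 : W w0 -> forall k, Crec W k w0.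
Proof.
move=> W0; elim => [//|k IH] /=; exists ((w0, w0), 0); last first.
  by rewrite /= scale0r addr0 subr0 scale1r.
by split; [split|rewrite /= in_itv /= lexx ler01].
Qed.

Lemma conv_sub_Crec w0 : W w0 -> forall k, convk W k.+1 `<=` Crec W k.
Proof.
move=> W0; elim => [|k IH] z [lam [ws [l0 [l1 [Wws ->]]]]].
  by move: l1; rewrite !big_ord1 => ->; rewrite scale1r.
move: l1; rewrite big_ord_recl [X in Crec _ _ X]big_ord_recl => l1.
set s := lam ord0 in l1 *.
have Sge0 : 0 <= \sum_(i < k.+1) lam (lift ord0 i) by apply: sumr_ge0 => i _.
have s1 : s <= 1 by rewrite -l1 lerDl.
have s0 : 0 <= s by apply: l0.
have [s1eq|sn1] := eqVneq s 1.
  have S0 : \sum_(i < k.+1) lam (lift ord0 i) = 0 by move: l1; rewrite s1eq; lra.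
  rewrite s1eq.
  have : \sum_(i < k.+1) lam (lift ord0 i) == 0 by rewrite S0.
  rewrite psumr_eq0 // => /allP Hall.
  rewrite big1 ?addr0; last first.
    by move=> i _; have := Hall i (mem_index_enum _) => /eqP ->; rewrite scale0r.
  exists ((w0, ws ord0), 1); last by rewrite /= subrr scale0r add0r scale1r.
  split; [split; [exact: Crec_ne|exact: Wws]|by rewrite /= in_itv /= ler01 lexx].
have s1' : 0 < 1 - s by rewrite subr_gt0 lt_neqAle sn1 s1.
pose u := \sum_(i < k.+1) (lam (lift ord0 i) / (1 - s)) *: ws (lift ord0 i).
have Cu : Crec W k u.
  apply: IH; exists (fun i => lam (lift ord0 i) / (1 - s)), (fun i => ws (lift ord0 i)).
  split; first by move=> i; rewrite divr_ge0 // ltW.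
  split; last by split.
  rewrite -mulr_suml (_ : \sum_(i < k.+1) lam (lift ord0 i) = 1 - s); last by lra.
  by rewrite mulfV // gt_eqF.
exists ((u, ws ord0), s).
  split; [split; [exact: Cu|exact: Wws]|by rewrite /= in_itv /= s0 s1].
rewrite /= addrC /u scaler_sumr; congr (_ + _); apply: eq_bigr => i _.
by rewrite scalerA mulrC divfK // gt_eqF.
Qed.

End Conv2.


Lemma dotv_cont (R : realType) n : continuous (fun z : 'rV[R]_n => dotv z z).
Proof.
rewrite /dotv; apply: cont_sum => i z.
by apply: continuousM; apply: coord_continuous.
Qed.

Lemma gordan (R : realType) n (W : set 'rV[R]_n) w0 :
  compact W -> W w0 -> (forall d, exists2 w, W w & 0 <= dotv w d) ->
  convk W n.+1 0.
Proof.
move=> cW W0 H.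
have cC : compact (Crec W n) := @Crec_compact R n W cW n.
have dcw : {within Crec W n, continuous (fun z : 'rV[R]_n => dotv z z)}.
  by apply: continuous_subspaceT => x; apply: dotv_cont.
have [z Cz zmin] := compact_EVT_min (ex_intro _ w0 (Crec_ne W0 n)) cC dcw.
rewrite inE in Cz.
have sub : forall y, Crec W n.+1 y -> Crec W n y.
  by move=> y Hy; apply: (conv_sub_Crec W0); apply: cara => //; apply: Crec_sub_conv.
have [z0|zn0] := eqVneq z 0; first by rewrite -z0; apply: Crec_sub_conv.
have zz : 0 < dotv z z.
  rewrite lt_neqAle dotv_ge0 andbT eq_sym; apply: contra zn0 => /eqP.
  by move/dotv_eq0 => ->.
have key : forall w, W w -> dotv z z <= dotv z w.
  move=> w Ww.
  pose a := dotv z (w - z); pose D := dotv (w - z) (w - z).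
  have E : forall s, (1 - s) *: z + s *: w = z + s *: (w - z).
    by move=> s; apply/rowP => i; rewrite !mxE; ring.
  have E2 : forall s, dotv (z + s *: (w - z)) (z + s *: (w - z)) =
      dotv z z + 2 * s * a + s ^+ 2 * D.
    move=> s; rewrite !dotvDl !dotvDr !dotvZl !dotvZr (dotvC (w - z) z) -/a -/D.
    ring.
  have Hs : forall s, 0 < s <= 1 -> 0 <= 2 * s * a + s ^+ 2 * D.
    move=> s /andP[s0 s1].
    have := zmin ((1 - s) *: z + s *: w).
    rewrite E E2 => h; suff : dotv z z <= dotv z z + 2 * s * a + s ^+ 2 * D by lra.
    apply: h; apply/mem_set; apply: sub; rewrite -E.
    exists ((z, w), s) => //; split; first by split.
    by rewrite /= in_itv /= (ltW s0) s1.
  have D0 : 0 <= D by apply: dotv_ge0.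
  have a0 : 0 <= a.
    rewrite leNgt; apply/negP => a0.
    have Da : 0 < D - a by lra.
    pose s := - a / (D - a).
    have sDa : s * (D - a) = - a by rewrite /s divfK // gt_eqF.
    have s0 : 0 < s by rewrite /s divr_gt0 // oppr_gt0.
    have s1 : s <= 1 by rewrite /s ler_pdivrMr // mul1r; lra.
    have := Hs s; rewrite s0 s1 => /(_ isT).
    have -> : 2 * s * a + s ^+ 2 * D = s * a * (1 + s).
      have -> : s ^+ 2 * D = s * (s * (D - a)) + s ^+ 2 * a by ring.
      rewrite sDa; ring.
    rewrite leNgt => /negP; apply.
    rewrite pmulr_llt0; last by lra.
    by rewrite pmulr_rlt0.
  have -> : dotv z w = dotv z z + a by rewrite /a dotvBr; ring.
  by rewrite lerDl.
have [w Ww hw] := H (- z).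
have := key w Ww; rewrite dotvNr dotvC in hw; lra.
Qed.


Section Subgrad.
Context {R : realType} {n : nat}.
Definition Nrm (c : 'rV[R]_n) := \sum_i `|c ord0 i|.
Lemma NrmZ k c : Nrm (k *: c) = `|k| * Nrm c.
Proof. by rewrite /Nrm mulr_sumr; apply: eq_bigr => i _; rewrite mxE normrM. Qed.
Lemma NrmN c : Nrm (- c) = Nrm c.
Proof. by rewrite /Nrm; apply: eq_bigr => i _; rewrite mxE normrN. Qed.

Variables (phi : 'rV[R]_n -> R) (d : 'rV[R]_n) (L : R).
Hypothesis phiconv : forall a b s, 0 <= s <= 1 ->
  phi ((1 - s) *: a + s *: b) <= (1 - s) * phi a + s * phi b.
Hypothesis phi0 : phi 0 = 0.
Hypothesis phid : forall t, 0 < t -> 0 <= phi (t *: d).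
Hypothesis phiL : forall c, phi c <= L * Nrm c.

Let phid' t : 0 <= t -> 0 <= phi (t *: d).
Proof.
by rewrite le_eqVlt => /orP[/eqP <-|/phid //]; rewrite scale0r phi0.
Qed.

Let mono (x : 'rV[R]_n) m s : 0 < m -> m <= s -> phi (m *: x) / m <= phi (s *: x) / s.
Proof.
move=> m0 ms; have s0 : 0 < s by apply: lt_le_trans ms.
have c01 : 0 <= m / s <= 1.
  by apply/andP; split; [rewrite divr_ge0 // ltW | rewrite ler_pdivrMr // mul1r].
have h := phiconv 0 (s *: x) c01.
rewrite scaler0 add0r scalerA divfK ?gt_eqF // phi0 mulr0 add0r in h.
rewrite ler_pdivrMr //; apply: (le_trans h).
suff -> : phi (s *: x) / s * m = m / s * phi (s *: x) by [].
by ring.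
Qed.

Let S c := [set y | exists s t, 0 < s /\ 0 <= t /\ y = phi (s *: (c + t *: d)) / s].
Let q c := inf (S c).

Let S_ne c : S c (phi c).
Proof. by exists 1, 0; rewrite ltr01 lexx scale0r addr0 scale1r divr1. Qed.

Let S_lb c : lbound (S c) (- (L * Nrm c)).
Proof.
move=> _ [s [t [s0 [t0 ->]]]].
rewrite ler_pdivlMr //.
have h := phiconv (s *: (c + t *: d)) (- (s *: c)) (s := (2:R)^-1).
have h2 : (0:R) <= (2:R)^-1 <= 1 by apply/andP; split; lra.
have {h}h := h h2.
have E : (1 - (2:R)^-1) *: (s *: (c + t *: d)) + (2:R)^-1 *: - (s *: c) = (s * t / 2) *: d.
  by apply/rowP => i; rewrite !mxE; field.
rewrite E in h.
have h3 : 0 <= phi ((s * t / 2) *: d).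
  by apply: phid'; rewrite divr_ge0 // mulr_ge0 // ltW.
have h4 := phiL (- (s *: c)); rewrite NrmN NrmZ gtr0_norm // in h4.
have : 0 <= phi (s *: (c + t *: d)) + phi (- (s *: c)).
  have e : 1 - (2:R)^-1 = (2:R)^-1 by field.
  rewrite e in h; rewrite -(@pmulr_rge0 _ ((2:R)^-1)) ?invr_gt0 // mulrDr; lra.
nra.
Qed.

Let S_hasinf c : has_inf (S c).
Proof. by split; [exists (phi c); apply: S_ne|exists (- (L * Nrm c)); apply: S_lb]. Qed.

Let q_le c : q c <= phi c.
Proof. by apply: ge_inf; [exists (- (L * Nrm c)); apply: S_lb|apply: S_ne]. Qed.

Let q_md : q (- d) <= 0.
Proof.
apply: ge_inf; first by exists (- (L * Nrm (- d))); apply: S_lb.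
by exists 1, 1; rewrite ltr01 ler01 !scale1r addNr phi0 divr1.
Qed.

Let qD a b : q (a + b) <= q a + q b.
Proof.
suff H : forall y1 y2, S a y1 -> S b y2 -> q (a + b) <= y1 + y2.
  have H2 : forall y2, S b y2 -> q (a + b) - y2 <= q a.
    move=> y2 Sy2; apply: lb_le_inf; first by exists (phi a); apply: S_ne.
    by move=> y1 Sy1; have := H y1 y2 Sy1 Sy2; lra.
  suff : q (a + b) - q a <= q b by lra.
  apply: lb_le_inf; first by exists (phi b); apply: S_ne.
  by move=> y2 Sy2; have := H2 y2 Sy2; lra.
move=> _ _ [s1 [t1 [s10 [t10 ->]]]] [s2 [t2 [s20 [t20 ->]]]].
pose m := Num.min s1 s2.
have m0 : 0 < m by rewrite /m lt_min s10 s20.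
have ms1 : m <= s1 by rewrite /m ge_min lexx.
have ms2 : m <= s2 by rewrite /m ge_min lexx orbT.
have h1 := mono (a + t1 *: d) m0 ms1.
have h2 := mono (b + t2 *: d) m0 ms2.
have hc := phiconv (m *: (a + t1 *: d)) (m *: (b + t2 *: d)) (s := (2:R)^-1).
have h22 : (0:R) <= (2:R)^-1 <= 1 by apply/andP; split; lra.
have {hc}hc := hc h22.
have e : 1 - (2:R)^-1 = (2:R)^-1 by field.
rewrite e in hc.
have E : (2:R)^-1 *: (m *: (a + t1 *: d)) + (2:R)^-1 *: (m *: (b + t2 *: d)) =
    (m / 2) *: (a + b + (t1 + t2) *: d).
  by apply/rowP => i; rewrite !mxE; field.
rewrite E in hc.
have Sel : S (a + b) (phi ((m / 2) *: (a + b + (t1 + t2) *: d)) / (m / 2)).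
  by exists (m / 2), (t1 + t2); rewrite divr_gt0 // addr_ge0.
have := ge_inf (proj2 (S_hasinf (a + b))) Sel; rewrite -/(q (a + b)) => hq.
apply: (le_trans hq).
set A1 := phi (m *: (a + t1 *: d)) in h1 hc *.
set A2 := phi (m *: (b + t2 *: d)) in h2 hc *.
set B := phi ((m / 2) *: (a + b + (t1 + t2) *: d)) in hc *.
have -> : B / (m / 2) = (2 * B) / m by field; rewrite gt_eqF.
have : (2 * B) / m <= A1 / m + A2 / m.
  by rewrite -mulrDl ler_pM2r ?invr_gt0 //; lra.
lra.
Qed.

Let qZ (l : R) a : 0 < l -> l * q a <= q (l *: a).
Proof.
move=> l0; apply: lb_le_inf; first by exists (phi (l *: a)); apply: S_ne.
move=> _ [s [t [s0 [t0 ->]]]].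
have Sel : S a (phi ((s * l) *: (a + (t / l) *: d)) / (s * l)).
  by exists (s * l), (t / l); rewrite mulr_gt0 // divr_ge0 // ltW.
have := ge_inf (proj2 (S_hasinf a)) Sel; rewrite -/(q a) => hq.
rewrite -(ler_pM2l l0) in hq.
have E : s *: (l *: a + t *: d) = (s * l) *: (a + (t / l) *: d).
  by apply/rowP => i; rewrite !mxE; field; rewrite gt_eqF.
rewrite E; apply: (le_trans hq).
set V := phi _.
have -> : l * (V / (s * l)) = V / s by field; rewrite ?mulf_neq0 ?gt_eqF.
by [].
Qed.

Lemma subgrad : exists w, (forall c, dotv w c <= phi c) /\ 0 <= dotv w d.
Proof.
have [w Hw] := HB_fin qD qZ.
exists w; split; first by move=> c; apply: le_trans (Hw c) (q_le c).
have := le_trans (Hw (- d)) q_md; rewrite dotvNr; lra.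
Qed.

End Subgrad.


Section Core.
Context {R : realType} {n : nat} {P : topologicalType}.
Variables (psi : P -> 'rV[R]_n -> R) (L : R).
Hypothesis cP : compact [set: P].
Hypothesis psic : forall c, continuous (fun p => psi p c).
Hypothesis psiconv : forall p a b s, 0 <= s <= 1 ->
  psi p ((1 - s) *: a + s *: b) <= (1 - s) * psi p a + s * psi p b.
Hypothesis psi0 : forall p, psi p 0 <= 0.
Hypothesis psiH : forall c, exists p, 0 <= psi p c.
Hypothesis psiL : forall p c, psi p c <= L * Nrm c.

Lemma claim1 d : exists p, psi p 0 = 0 /\ forall t, 0 < t -> 0 <= psi p (t *: d).
Proof.
case: (pselect (exists p, psi p 0 = 0 /\ forall t, 0 < t -> 0 <= psi p (t *: d))) => // Hn.
exfalso.
have Ht : forall p, exists2 t0, 0 < t0 & psi p (t0 *: d) < 0.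
  move=> p.
  have [p0|p0] : psi p 0 = 0 \/ psi p 0 < 0.
    by move: (psi0 p); rewrite le_eqVlt => /orP[/eqP->|->]; [left|right].
    have : ~ (forall t, 0 < t -> 0 <= psi p (t *: d)) by move=> H; apply: Hn; exists p.
    move=> /existsNP [t /not_implyP [t0 /negP]]; rewrite -ltNge => h.
    by exists t.
  set a := - psi p 0; set b := psi p d.
  have a0 : 0 < a by rewrite /a oppr_gt0.
  have den : 0 < 2 * a + `|b| by apply: ltr_wpDr; [exact: normr_ge0|rewrite mulr_gt0].
  pose t := a / (2 * a + `|b|).
  have t0 : 0 < t by rewrite /t divr_gt0.
  have te : t * (2 * a + `|b|) = a by rewrite /t divfK // gt_eqF.
  have t1 : t <= 1.
    rewrite /t ler_pdivrMr // mul1r; have := normr_ge0 b; lra.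
  exists t => //.
  have := psiconv p 0 d (s := t); rewrite t1 ltW //= => /(_ isT).
  rewrite scaler0 add0r => h; apply: (le_lt_trans h).
  have tb : t * b <= t * `|b| by apply: ler_wpM2l; [exact: ltW|exact: ler_norm].
  have ta : 0 < t * a by rewrite mulr_gt0.
  rewrite -/b (_ : psi p 0 = - a); last by rewrite /a opprK.
  move: te; rewrite mulrDr => te.
  have -> : (1 - t) * - a + t * b = - a + t * a + t * b by ring.
  have e2 : t * (2 * a) = 2 * (t * a) by ring.
  rewrite e2 in te.
  lra.
have H : \forall t \near 0^'+, [set: P] `<=` (fun p => psi p (t *: d) < 0).
  apply: ((proj1 (compact_near_coveringP _) cP) R (0^'+)
    (fun t p => psi p (t *: d) < 0)).
  move=> p _; have [t0 t00 ht0] := Ht p.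
  exists ([set p' | psi p' (t0 *: d) < 0], [set t | 0 < t <= t0]).
    split => /=.
      exact: (cvgr_lt _ (@psic (t0 *: d) p) _ ht0).
    apply: filterS (filterI (nbhs_right_gt 0) (nbhs_right_lt t00)).
    by move=> t [h1 h2]; rewrite /= h1 ltW.
  move=> [p' t] /= [Hp' /andP[tg0 tle]].
  have c01 : 0 <= t / t0 <= 1.
    by apply/andP; split; [rewrite divr_ge0 // ltW|rewrite ler_pdivrMr // mul1r].
  have := psiconv p' 0 (t0 *: d) c01.
  rewrite scaler0 add0r scalerA divfK ?gt_eqF // => h; apply: (le_lt_trans h).
  have h1 : (1 - t / t0) * psi p' 0 <= 0.
    by rewrite mulr_ge0_le0 // subr_ge0; case/andP: c01.
  have h2 : t / t0 * psi p' (t0 *: d) < 0 by rewrite pmulr_rlt0 // divr_gt0.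
  lra.
have [t Ht'] := filter_ex H.
have [p Hp] := psiH (t *: d).
by have := Ht' p I; rewrite ltNge Hp.
Qed.

End Core.


Lemma dotv_contl (R : realType) n (c : 'rV[R]_n) : continuous (fun w : 'rV[R]_n => dotv w c).
Proof.
rewrite /dotv; apply: cont_sum => i z.
by apply: continuousM; [apply: coord_continuous|apply: cst_continuous].
Qed.

Lemma dotv_delta (R : realType) n (w : 'rV[R]_n) j :
  dotv w (\row_k (k == j)%:R) = w ord0 j.
Proof.
rewrite /dotv (bigD1 j) //= big1 ?addr0; last by move=> i /negbTE ne; rewrite mxE ne mulr0.
by rewrite mxE eqxx mulr1.
Qed.

Lemma Nrm_delta (R : realType) n (j : 'I_n) : Nrm (\row_k (k == j)%:R : 'rV[R]_n) = 1.
Proof.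
rewrite /Nrm (bigD1 j) //= big1 ?addr0; last by move=> i /negbTE ne; rewrite mxE ne normr0.
by rewrite mxE eqxx normr1.
Qed.

Lemma dotv_suml (R : realType) n (I : Type) (r : seq I) (F : I -> 'rV[R]_n) c :
  dotv (\sum_(i <- r) F i) c = \sum_(i <- r) dotv (F i) c.
Proof.
rewrite /dotv exchange_big /=; apply: eq_bigr => j _.
by rewrite summxE mulr_suml.
Qed.

Section Core2.
Context {R : realType} {n : nat} {P : topologicalType}.
Variables (psi : P -> 'rV[R]_n -> R) (L : R).
Hypothesis cP : compact [set: P].
Hypothesis psic : forall c, continuous (fun p => psi p c).
Hypothesis psiconv : forall p a b s, 0 <= s <= 1 ->
  psi p ((1 - s) *: a + s *: b) <= (1 - s) * psi p a + s * psi p b.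
Hypothesis psi0 : forall p, psi p 0 <= 0.
Hypothesis psiH : forall c, exists p, 0 <= psi p c.
Hypothesis psiL : forall p c, psi p c <= L * Nrm c.

Let Wset := [set w : 'rV[R]_n | exists p, psi p 0 = 0 /\ forall c, dotv w c <= psi p c].

Let W_closed : closed Wset.
Proof.
rewrite -[Wset]setCK; apply: open_closedC.
rewrite openE => w0 nW; rewrite /interior.
have H : \forall w \near w0, [set: P] `<=`
    (fun p => psi p 0 < 0 \/ exists c, psi p c < dotv w c).
  apply: ((proj1 (compact_near_coveringP _) cP) 'rV[R]_n (nbhs w0)
    (fun w p => psi p 0 < 0 \/ exists c, psi p c < dotv w c)) => p _.
  have [p0|p0] : psi p 0 < 0 \/ psi p 0 = 0.
    by move: (psi0 p); rewrite le_eqVlt => /orP[/eqP->|->]; [right|left].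
    exists ([set p' | psi p' 0 < 0], [set: 'rV[R]_n]).
      by split => /=; [exact: (cvgr_lt _ (@psic 0 p) _ p0)|exact: filterT].
    by move=> [p' w] /= [h _]; left.
  have : ~ (forall c, dotv w0 c <= psi p c) by move=> H; apply: nW; exists p.
  move=> /existsNP [c /negP]; rewrite -ltNge => hc.
  set e := dotv w0 c - psi p c.
  have e0 : 0 < e by rewrite /e subr_gt0.
  exists ([set p' | psi p' c < psi p c + e / 2], [set w | dotv w0 c - e / 2 < dotv w c]).
    split => /=.
      by apply: (cvgr_lt _ (@psic c p)); rewrite ltrDl divr_gt0.
    apply: (cvgr_gt _ (@dotv_contl R n c w0)).
    by rewrite gtrBl divr_gt0.
  move=> [p' w] /= [h1 h2]; right; exists c.
  have : psi p c + e / 2 = dotv w0 c - e / 2 by rewrite /e; field.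
  lra.
apply: filterS H => w Hw [p [p0 Hc]].
case: (Hw p I) => [|[c hc]]; first by rewrite p0 ltxx.
by have := Hc c; lra.
Qed.

Let W_bounded : bounded_set Wset.
Proof.
rewrite /= /bounded_near.
apply: filterS (nbhs_pinfty_ge (num_real `|L|)) => M LM w [p [p0 Hc]].
change (mx_norm w <= M); rewrite mx_normrE; apply/bigmax_leP; split.
  by apply: le_trans LM.
move=> [i j] _ /=; rewrite ord1.
have h1 := Hc (\row_k (k == j)%:R).
rewrite dotv_delta in h1.
have h2 := Hc (- \row_k (k == j)%:R).
rewrite dotvNr dotv_delta in h2.
have h3 := psiL p (\row_k (k == j)%:R); rewrite Nrm_delta mulr1 in h3.
have h4 := psiL p (- \row_k (k == j)%:R); rewrite NrmN Nrm_delta mulr1 in h4.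
apply: le_trans LM; apply: le_trans (ler_norm L).
rewrite ler_norml; apply/andP; split; lra.
Qed.

Let W_compact : compact Wset := bounded_closed_compact W_bounded W_closed.

Let W_dir d : exists2 w, Wset w & 0 <= dotv w d.
Proof.
have [p [p0 pd]] := claim1 cP psic psiconv psi0 psiH d.
have [w [Hw wd]] := @subgrad R n (psi p) d L (psiconv p) p0 pd (psiL p).
by exists w => //; exists p.
Qed.

Lemma core : exists (lam : 'I_n.+1 -> R) (ps : 'I_n.+1 -> P),
  (forall i, 0 <= lam i) /\ \sum_i lam i = 1 /\ (forall i, psi (ps i) 0 = 0) /\
  (forall c, 0 <= \sum_i lam i * psi (ps i) c).
Proof.
have [w0 W0 _] := W_dir 0.
have [lam [ws [l0 [l1 [Wws e0]]]]] := gordan W_compact W0 W_dir.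
have [ps Hps] := choice Wws.
exists lam, ps; split => //; split => //; split; first by move=> i; case: (Hps i).
move=> c.
have E : \sum_i lam i * dotv (ws i) c = 0.
  by rewrite -[RHS](dotv0l c) e0 dotv_suml; apply: eq_bigr => i _; rewrite dotvZl.
have : \sum_i lam i * dotv (ws i) c <= \sum_i lam i * psi (ps i) c.
  apply: ler_sum => i _; apply: ler_wpM2l => //.
  by case: (Hps i) => _; apply.
by rewrite E.
Qed.

End Core2.


Lemma cont_sumY (R : realType) (V : normedModType R) (T : topologicalType) (I : Type)
  (r : seq I) (P : pred I) (F : I -> T -> V) : (forall i, continuous (F i)) ->
  continuous (fun x => \sum_(i <- r | P i) F i x).
Proof.
move=> Fc; elim: r => [|i r IH].
  by under eq_fun do rewrite big_nil; apply: cst_continuous.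
case Pi: (P i).
  under eq_fun do rewrite big_cons Pi.
  by move=> x; apply: continuousD; [apply: Fc|apply: IH].
by under eq_fun do rewrite big_cons Pi.
Qed.

Lemma subBB (V : zmodType) (a b c : V) : (a - c) - (b - c) = a - b.
Proof. by rewrite opprB addrA subrK. Qed.
Lemma subBB' (V : zmodType) (a b c : V) : (a - b) - (a - c) = c - b.
Proof. by rewrite opprB addrC addrA subrK. Qed.

Section App.
Context {R : realType}.

Lemma loc_bdd (T : topologicalType) (phi : T -> R) : compact [set: T] ->
  (forall x0 : T, exists B, \forall x \near x0, phi x <= B) -> exists M, forall x, phi x <= M.
Proof.
move=> cT Hl.
have H : \forall M \near +oo, [set: T] `<=` (fun x => phi x <= M).
  apply: ((proj1 (compact_near_coveringP _) cT) R (+oo) (fun M x => phi x <= M)) => x0 _.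
  have [B HB] := Hl x0.
  exists ([set x | phi x <= B], [set M | B <= M]).
    by split => //=; apply: nbhs_pinfty_ge; apply: num_real.
  by move=> [x M] /= [h1 h2]; apply: le_trans h2.
have [M HM] := filter_ex H.
by exists M => x; apply: HM.
Qed.

Lemma cont_bdd (T : topologicalType) (Y : normedModType R) (r : T -> Y) :
  compact [set: T] -> continuous r -> exists M, forall x, `|r x| <= M.
Proof.
move=> cT rc; have H := loc_bdd (phi := fun x => `|r x|) cT; apply: H => x0.
exists (`|r x0| + 1).
have hc : {for x0, continuous (fun x => `|r x|)}.
  exact: (continuous_comp (rc x0) (@norm_continuous _ _ (r x0))).
apply: filterS (cvgr_lt _ hc (`|r x0| + 1) _) => [x /ltW //|].
by rewrite ltrDl ltr01.
Qed.

Context {X A : topologicalType} {Y : normedModType R}.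

Lemma unorm_ge (r : X -> Y) : (exists M, forall x, `|r x| <= M) ->
  forall x, `|r x| <= unorm r.
Proof.
move=> [M HM] x.
have hub : has_ubound (range (fun x => `|r x|)) by exists M => _ [y _ <-]; apply: HM.
by apply: (ub_le_sup hub); exists x.
Qed.

Lemma unorm_le (r : X -> Y) M : (exists x : X, True) -> (forall x, `|r x| <= M) ->
  unorm r <= M.
Proof.
move=> [x0 _] H; apply: ge_sup; first by exists `|r x0|, x0.
by move=> _ [y _ <-]; apply: H.
Qed.

Variables (f : A -> X -> Y).
Hypothesis cX : compact [set: X].
Hypothesis cA : compact [set: A].
Hypothesis Xne : exists x : X, True.
Hypothesis Ane : exists a : A, True.
Hypothesis fc : forall a, continuous (f a).
Hypothesis Hf : forall (a : A) (e : R), 0 < e ->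
     \forall b \near a, unorm (fun x => f b x - f a x) < e.

Lemma diff_bdd (h : X -> Y) : continuous h -> forall a,
  exists M, forall x, `|f a x - h x| <= M.
Proof.
move=> hc a; apply: (cont_bdd (r := fun x => f a x - h x)) cX _ => x.
by apply: cvgB; [apply: fc|apply: hc].
Qed.

Lemma unorm_tri (h : X -> Y) : continuous h -> forall a0 a,
  unorm (fun x => f a x - h x) <=
  unorm (fun x => f a x - f a0 x) + unorm (fun x => f a0 x - h x).
Proof.
move=> hc a0 a; have H := @unorm_le (fun x => f a x - h x) _ Xne; apply: H => x.
have e : f a x - h x = (f a x - f a0 x) + (f a0 x - h x) by rewrite addrA subrK.
rewrite e; apply: le_trans (ler_normD _ _) _.
apply: lerD; apply: unorm_ge; apply: diff_bdd => //; exact: fc.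
Qed.

Lemma unorm_bdd (h : X -> Y) : continuous h ->
  exists M, forall a, unorm (fun x => f a x - h x) <= M.
Proof.
move=> hc; have H := loc_bdd (phi := fun a => unorm (fun x => f a x - h x)) cA; apply: H => a0.
exists (1 + unorm (fun x => f a0 x - h x)).
apply: filterS (Hf a0 ltr01) => a Ha.
have := unorm_tri hc a0 a; lra.
Qed.

Lemma unorm_le_sdev (h : X -> Y) : continuous h -> forall a,
  unorm (fun x => f a x - h x) <= sdev f h.
Proof.
move=> hc a; have [M HM] := unorm_bdd hc.
have hub : has_ubound (range (fun a => unorm (fun x => f a x - h x))).
  by exists M => _ [b _ <-]; apply: HM.
by apply: (ub_le_sup hub); exists a.
Qed.

Lemma sdev_ge (h : X -> Y) : continuous h -> forall a x,
  `|f a x - h x| <= sdev f h.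
Proof.
move=> hc a x; apply: le_trans (unorm_le_sdev hc a).
by apply: unorm_ge; apply: diff_bdd.
Qed.

Lemma sdev_le (h : X -> Y) M : (forall a x, `|f a x - h x| <= M) -> sdev f h <= M.
Proof.
move=> H; have [a0 _] := Ane; apply: ge_sup.
  by exists (unorm (fun x => f a0 x - h x)), a0.
by move=> _ [a _ <-]; apply: unorm_le.
Qed.

Lemma joint_cont (k : X -> Y) : continuous k ->
  continuous (fun p : A * X => f p.1 p.2 - k p.2).
Proof.
move=> kc [a0 x0]; apply/cvgrPdist_lt => e e0.
have e3 : 0 < e / 3 by rewrite divr_gt0.
have Ha := Hf a0 e3.
have Hx1 := (proj1 (cvgrPdist_lt _ _) (@fc a0 x0)) _ e3.
have Hx2 := (proj1 (cvgrPdist_lt _ _) (@kc x0)) _ e3.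
exists ([set a | unorm (fun x => f a x - f a0 x) < e / 3],
        [set x | `|f a0 x0 - f a0 x| < e / 3 /\ `|k x0 - k x| < e / 3]).
  split => /=; first exact: Ha.
  have hI := @filterI X (nbhs (x0 : X)) (nbhs_filter x0) _ _ (Hx1 (nbhs_filter x0)) (Hx2 (nbhs_filter x0)).
  by apply: (@filterS X (nbhs x0) (nbhs_filter x0) _ _ _ hI) => x [? ?]; split.
move=> [a x] /= [h1 [h2 h3]].
have h4 : `|f a x - f a0 x| <= unorm (fun x => f a x - f a0 x).
  by apply: unorm_ge; apply: diff_bdd => //; exact: fc.
set F0 := f a0 x0 - k x0; set F1 := f a x - k x.
have d1 : `|F0 - F1| <= `|F0 - (f a0 x - k x)| + `|(f a0 x - k x) - F1|.
  exact: ler_distD.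
have d2 : `|F0 - (f a0 x - k x)| <= `|F0 - (f a0 x - k x0)| +
    `|(f a0 x - k x0) - (f a0 x - k x)|.
  exact: ler_distD.
rewrite /F0 subBB in d2; rewrite subBB' in d2.
rewrite /F1 subBB in d1.
rewrite (distrC (f a0 x)) in d1.
rewrite (distrC (k x)) in d2.
lra.
Qed.

End App.


Lemma aff_id (R : realType) (V : lmodType R) (y a b : V) (s : R) :
  y - ((1 - s) *: a + s *: b) = (1 - s) *: (y - a) + s *: (y - b).
Proof.
rewrite !scalerBr.
have hy : y = (1 - s) *: y + s *: y by rewrite -scalerDl subrK scale1r.
rewrite {1}hy opprD.
by rewrite addrACA.
Qed.

Unset Implicit Arguments.
Theorem theorem2 (R : realType) (X : topologicalType) (Y : normedModType R)
  (A : topologicalType) (n : nat) (g : 'I_n -> X -> Y) (f : A -> X -> Y)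
  (fstar : X -> Y) :
  compact [set: X] -> hausdorff_space X ->
  compact [set: A] -> hausdorff_space A -> (exists a : A, True) ->
  (0 < n)%N -> (forall i, continuous (g i)) -> lin_indep g ->
  (forall a, continuous (f a)) ->
  (forall (a : A) (e : R), 0 < e ->
     \forall b \near a, unorm (fun x => f b x - f a x) < e) ->
  inSpan g fstar ->
  ((forall h, inSpan g h -> sdev f fstar <= sdev f h) <->
   exists k : nat, (1 <= k <= n.+1)%N /\
     exists (as_ : 'I_k -> A) (xs : 'I_k -> X) (lam : 'I_k -> R),
       (forall i, 0 < lam i) /\ \sum_(i < k) lam i = 1 /\
       (forall h, inSpan g h ->
          \sum_(i < k) lam i * `|f (as_ i) (xs i) - fstar (xs i)|
          <= \sum_(i < k) lam i * `|f (as_ i) (xs i) - h (xs i)|) /\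
       (forall i, `|f (as_ i) (xs i) - fstar (xs i)|
                    = unorm (fun x => f (as_ i) x - fstar x) /\
                  unorm (fun x => f (as_ i) x - fstar x) = sdev f fstar)).
Proof.
move=> cX _ cA _ Ane n0 gc lind fc Hf [cs fsE].
have Xne : exists x : X, True.
  case: (pselect (exists x : X, True)) => // nX; exfalso.
  have : (1 : R) = 0.
    by apply: (lind (fun _ => 1)) (Ordinal n0) => x; exfalso; apply: nX; exists x.
  by move/eqP; rewrite oner_eq0.
have spanc : forall c : 'I_n -> R, continuous (fun x => \sum_(i < n) c i *: g i x).
  move=> c; apply: cont_sumY => i x.
  by apply: continuousZ; [apply: cst_continuous|apply: gc].
have spanh : forall h, inSpan g h -> continuous h by move=> h [c ->]; apply: spanc.
have fsc : continuous fstar by apply: spanh; exists cs.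
pose E := sdev f fstar.
have Hge := sdev_ge cX cA Xne fc Hf.
have Huge := unorm_le_sdev cX cA Xne fc Hf.
split; last first.
  move=> [k [/andP[k1 kn] [as_ [xs [lam [lpos [lsum [Hi Hii]]]]]]]] h hspan.
  have hc := spanh h hspan.
  have e1 : sdev f fstar = \sum_i lam i * `|f (as_ i) (xs i) - fstar (xs i)|.
    under eq_bigr do rewrite (proj1 (Hii _)) (proj2 (Hii _)).
    by rewrite -mulr_suml lsum mul1r.
  rewrite e1; apply: le_trans (Hi h hspan) _.
  have -> : sdev f h = \sum_(i < k) lam i * sdev f h by rewrite -mulr_suml lsum mul1r.
  apply: ler_sum => i _; apply: ler_wpM2l; first exact: ltW.
  exact: Hge.
move=> best.
pose G (x : X) (c : 'rV[R]_n) : Y := \sum_i c ord0 i *: g i x.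
have GD : forall x a b, G x (a + b) = G x a + G x b.
  by move=> x a b; rewrite /G -big_split; apply: eq_bigr => i _; rewrite mxE scalerDl.
have GZ : forall x k a, G x (k *: a) = k *: G x a.
  by move=> x k a; rewrite /G scaler_sumr; apply: eq_bigr => i _; rewrite mxE scalerA.
have G0 : forall x, G x 0 = 0.
  by move=> x; rewrite /G big1 // => i _; rewrite mxE scale0r.
have Gc : forall c, continuous (fun x => G x c) by move=> c; apply: spanc.
pose psi (p : A * X) (c : 'rV[R]_n) := `|(f p.1 p.2 - fstar p.2) - G p.2 c| - E.
have cP : compact [set: A * X] by rewrite -setXTT; apply: compact_setX.
have hcont : forall c, continuous (fun x => fstar x + G x c).
  by move=> c x; apply: cvgD; [apply: fsc|apply: Gc].
have psic : forall c, continuous (fun p => psi p c).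
  move=> c p.
  have -> : (fun p => psi p c) = (fun p => `|f p.1 p.2 - (fstar p.2 + G p.2 c)| - E).
    by apply/funext => q; rewrite /psi opprD addrA.
  apply: cvgB; last exact: cvg_cst.
  have jc := joint_cont cX fc Hf (hcont c).
  exact: (continuous_comp (jc p) (@norm_continuous _ _ _)).
have psiconv : forall p a b s, 0 <= s <= 1 ->
    psi p ((1 - s) *: a + s *: b) <= (1 - s) * psi p a + s * psi p b.
  move=> p a b s /andP[s0 s1]; rewrite /psi GD !GZ aff_id.
  have := ler_normD ((1 - s) *: (f p.1 p.2 - fstar p.2 - G p.2 a))
                    (s *: (f p.1 p.2 - fstar p.2 - G p.2 b)).
  rewrite !normrZ !ger0_norm // ?subr_ge0 //; lra.
have psi0 : forall p, psi p 0 <= 0.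
  by move=> [a x]; rewrite /psi G0 subr0 subr_le0; apply: Hge.
have psiH : forall c, exists p, 0 <= psi p c.
  move=> c; case: (pselect (exists p, 0 <= psi p c)) => // Hn; exfalso.
  pose h x := fstar x + G x c.
  have hspan : inSpan g h.
    exists (fun i => cs i + c ord0 i); apply/funext => x.
    by rewrite /h fsE /G -big_split; apply: eq_bigr => i _; rewrite scalerDl.
  have hb := best h hspan.
  have hcw : {within [set: A * X], continuous (fun p => `|f p.1 p.2 - h p.2|)}.
    apply: continuous_subspaceT => p.
    have jc := joint_cont cX fc Hf (hcont c).
  exact: (continuous_comp (jc p) (@norm_continuous _ _ _)).
  have [a0 _] := Ane; have [x0 _] := Xne.
  have [p0 _ pmax] := compact_EVT_max (ex_intro _ (a0, x0) I) cP hcw.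
  have H1 : sdev f h <= `|f p0.1 p0.2 - h p0.2|.
    by apply: (sdev_le Xne Ane) => a x; apply: (pmax (a, x)); rewrite inE.
  have H2 : psi p0 c < 0 by rewrite ltNge; apply/negP => H; apply: Hn; exists p0.
  move: H2; rewrite /psi -addrA -opprD /E => H2.
  have H3 : `|f p0.1 p0.2 - h p0.2| - sdev f fstar < 0 := H2.
  rewrite subr_lt0 in H3; have := le_lt_trans (le_trans hb H1) H3; by rewrite ltxx.
have [M HM] : exists M : 'I_n -> R, forall i x, `|g i x| <= M i.
  have H : forall i, exists Mi, forall x, `|g i x| <= Mi.
    by move=> i; apply: cont_bdd cX (gc i).
  by have [M HM] := choice H; exists M.
pose L := \sum_i `|M i|.
have psiL : forall p c, psi p c <= L * Nrm c.
  move=> [a x] c; rewrite /psi /=.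
  have h1 := Hge fstar fsc a x; rewrite -/E in h1.
  have h2 := ler_normB (f a x - fstar x) (G x c).
  suff : `|G x c| <= L * Nrm c by lra.
  apply: le_trans (ler_norm_sum _ _ _) _.
  rewrite /Nrm mulr_sumr; apply: ler_sum => i _.
  rewrite normrZ mulrC; apply: ler_wpM2r; first exact: normr_ge0.
  apply: le_trans (HM i x) _; apply: le_trans (ler_norm _) _.
  rewrite /L (bigD1 i) //= lerDl; apply: sumr_ge0 => j _; exact: normr_ge0.
have [lam0 [ps [l0 [l1 [pz Hc]]]]] := core cP psic psiconv psi0 psiH psiL.
pose S : {set 'I_n.+1} := finset (fun i => 0 < lam0 i).
have lamS : forall i, i \notin S -> lam0 i = 0.
  move=> i; rewrite inE -leNgt => h; apply/eqP; rewrite eq_le h; exact: l0.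
have conv : forall F : 'I_n.+1 -> R,
    \sum_(j < #|S|) lam0 (enum_val j) * F (enum_val j) = \sum_i lam0 i * F i.
  move=> F; rewrite -(big_enum_val (A := mem S) (fun i => lam0 i * F i)) big_mkcond /=.
  apply: eq_bigr => i _; case: ifP => // /negbT /lamS ->; by rewrite mul0r.
have pzE : forall i, `|f (ps i).1 (ps i).2 - fstar (ps i).2| = E.
  by move=> i; have := pz i; rewrite /psi G0 subr0; lra.
exists #|S|; split.
  apply/andP; split; last by rewrite -[X in (_ <= X)%N](card_ord n.+1) max_card.
  rewrite card_gt0; apply/negP => /eqP S0.
  have : \sum_i lam0 i = 0.
    by rewrite big1 // => i _; apply: lamS; rewrite S0 inE.
  by rewrite l1 => /eqP; rewrite oner_eq0.
exists (fun j => (ps (enum_val j)).1), (fun j => (ps (enum_val j)).2),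
       (fun j => lam0 (enum_val j)).
split; first by move=> j; have := enum_valP j; rewrite inE.
split.
  have := conv (fun _ => 1); under eq_bigr do rewrite mulr1.
  by under [in RHS]eq_bigr do rewrite mulr1; rewrite l1.
split.
  move=> h [ch ->].
  pose c := \row_i (ch i - cs i) : 'rV[R]_n.
  have hE : forall x, \sum_(i < n) ch i *: g i x = fstar x + G x c.
    move=> x; rewrite fsE /G -big_split; apply: eq_bigr => i _.
    by rewrite mxE scalerBl /= addrC subrK.
  under eq_bigr do rewrite pzE.
  under [X in _ <= X]eq_bigr do rewrite hE opprD addrA.
  rewrite (conv (fun _ => E)).
  have := conv (fun i => `|f (ps i).1 (ps i).2 - fstar (ps i).2 - G (ps i).2 c|).
  move=> ->.
  have := Hc c; rewrite /psi.
  under eq_bigr do rewrite mulrBr.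
  rewrite sumrB -mulr_suml l1 mul1r.
  lra.
move=> j; set i := enum_val j.
have e1 := pzE i.
have u1 : `|f (ps i).1 (ps i).2 - fstar (ps i).2| <= unorm (fun x => f (ps i).1 x - fstar x).
  exact: (unorm_ge (diff_bdd cX fc fsc (ps i).1)).
have u2 := Huge fstar fsc (ps i).1; rewrite -/E in u2.
suff : unorm (fun x => f (ps i).1 x - fstar x) = E by move=> ->; split.
by apply/eqP; rewrite eq_le u2 -{1}e1 u1.
Qed.
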